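(* Let $B>0$, $\epsilon\in(0,2B)$ and $c=\frac{1}{2B-\epsilon}$ (so $c>\frac{1}{2B}$). Define $f(z)=\operatorname{sinc}(\epsilon z)e^{\pi i(2B-\epsilon)z}$ and $g(z)=\operatorname{sinc}(\epsilon z)e^{-\pi i(2B-\epsilon)z}$ for $z\in\mathbb{C}$. Then $f,g\in\mathrm{PW}^2_B$ (explicitly, $f(z)=\frac1\epsilon\int_{-B}^B\chi_{[B-\epsilon,B]}(\xi)e^{2\pi i\xi z}\,d\xi$ and $g(z)=\frac1\epsilon\int_{-B}^B\chi_{[-B,-B+\epsilon]}(\xi)e^{2\pi i\xi z}\,d\xi$), and for all $t\in\mathbb{R}$ we have $|f(t)|=|g(t)|$ and $f(t)\overline{f(t-c)}=g(t)\overline{g(t-c)}$, but there is no $\alpha\in\mathbb{R}$ with $f=e^{i\alpha}g$.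
   Context: $\operatorname{sinc}(z)=\frac{\sin(\pi z)}{\pi z}$ for $z\neq0$ and $\operatorname{sinc}(0)=1$. For $B>0$, the Paley--Wiener space is $\mathrm{PW}^2_B:=\{f:\mathbb{C}\to\mathbb{C} \mid \exists F\in L^2([-B,B])\ \forall z\in\mathbb{C}: f(z)=\int_{-B}^B F(\xi)e^{2\pi i \xi z}\,d\xi\}$. $\chi_I$ denotes the indicator function of the set $I$. *)

(* Defs.v *)
From mathcomp Require Import all_boot all_algebra.
From mathcomp Require Import all_classical all_reals all_analysis.
From mathcomp Require Import complex.
Import GRing.Theory Num.Theory.
Local Open Scope ring_scope.
Local Open Scope classical_set_scope.
Local Open Scope complex_scope.

Section Defs.
Variable R : realType.

Definition cexp (z : R[i]) : R[i] :=
  (expR (complex.Re z))%:C * ((cos (complex.Im z))%:C + 'i * (sin (complex.Im z))%:C).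

Definition csin (w : R[i]) : R[i] := (cexp ('i * w) - cexp (- ('i * w))) / (2 * 'i).

Definition sinc (z : R[i]) : R[i] :=
  if z == 0 then 1 else csin (pi%:C * z) / (pi%:C * z).

Definition cintegral (D : set R) (h : R -> R[i]) : R[i] :=
  (Rintegral lebesgue_measure D (fun x => complex.Re (h x)))%:C
  + 'i * (Rintegral lebesgue_measure D (fun x => complex.Im (h x)))%:C.

Definition L2on (a b : R) (F : R -> R[i]) : Prop :=
  measurable_fun `[a, b] (fun x => complex.Re (F x)) /\
  measurable_fun `[a, b] (fun x => complex.Im (F x)) /\
  (\int[lebesgue_measure]_(x in `[a, b])
      ((complex.Re (F x)) ^+ 2 + (complex.Im (F x)) ^+ 2)%:E < +oo)%E.

Definition PW (B : R) (f : R[i] -> R[i]) : Prop :=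
  exists F : R -> R[i], L2on (- B) B F /\
    forall z : R[i],
      f z = cintegral `[- B, B] (fun xi => F xi * cexp (2%:R * pi%:C * 'i * xi%:C * z)).

End Defs.

Arguments cexp {R}.
Arguments csin {R}.
Arguments sinc {R}.
Arguments cintegral {R}.
Arguments L2on {R}.
Arguments PW {R}.

(* Main.v *)
Require Import Defs.
From mathcomp Require Import all_boot all_algebra.
From mathcomp Require Import all_classical all_reals all_analysis.
From mathcomp Require Import complex ring lra.
Import order.Order.TTheory GRing.Theory Num.Theory.
Import numFieldNormedType.Exports.
Local Open Scope ring_scope.
Local Open Scope classical_set_scope.
Local Open Scope complex_scope.
Import ComplexField.
Section T.
Variable R : realType.

Lemma der_lin (a x : R) : is_derive x 1 (fun y : R => a * y) a.
Proof.
have H := is_deriveZ a (is_derive_id x (1:R)).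
rewrite -[X in is_derive _ _ _ X]mulr1.
exact: H.
Qed.

Lemma der_expl (a x : R) : is_derive x 1 (fun y : R => expR (a * y)) (a * expR (a * x)).
Proof.
have := @is_derive1_comp R expR (fun y => a * y) x (expR (a * x)) a (is_derive_expR _) (der_lin a x).
by rewrite mulrC.
Qed.
Lemma der_cosl (a x : R) : is_derive x 1 (fun y : R => cos (a * y)) (- (a * sin (a * x))).
Proof.
have := @is_derive1_comp R cos (fun y => a * y) x _ a (is_derive_cos _) (der_lin a x).
by rewrite mulrC mulrN.
Qed.
Lemma der_sinl (a x : R) : is_derive x 1 (fun y : R => sin (a * y)) (a * cos (a * x)).
Proof.
have := @is_derive1_comp R sin (fun y => a * y) x _ a (is_derive_sin _) (der_lin a x).
by rewrite mulrC.
Qed.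

Definition Gc (a b p q : R) (x : R) := expR (a * x) * (p * cos (b * x) - q * sin (b * x)).
Definition Gs (a b p q : R) (x : R) := expR (a * x) * (p * sin (b * x) + q * cos (b * x)).

Lemma der_Gc (k a b p q x : R) : a * p - b * q = k -> a * q + b * p = 0 ->
  is_derive x 1 (Gc a b p q) (k * (expR (a * x) * cos (b * x))).
Proof.
move=> h1 h2.
have H := is_deriveM (der_expl a x)
   (is_deriveB (is_deriveZ p (der_cosl b x)) (is_deriveZ q (der_sinl b x))).
rewrite /Gc.
have -> : (fun x0 : R => expR (a * x0) * (p * cos (b * x0) - q * sin (b * x0))) = (fun y => expR (a*y)) * (p \*: (fun y => cos (b * y)) - q \*: (fun y => sin (b*y))).
  by apply: funext => y.
apply: (is_derive_eq H).
have E : forall e c s : R, e * (p * - (b * s) - q * (b * c)) + (p * c - q * s) * (a * e) = k * (e * c).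
  move=> e c s.
  have -> : k * (e * c) = e * c * (a * p - b * q) - e * s * (a * q + b * p) by rewrite h1 h2; ring.
  ring.
exact: E.
Qed.

Lemma ftc_gen (F f : R -> R) (al be : R) : al < be ->
  (forall x : R, is_derive x (1:R) F (f x)) -> continuous f ->
  (\int[lebesgue_measure]_(x in `[al, be]) (f x)%:E = (F be)%:E - (F al)%:E)%E.
Proof.
move=> ab dF cf.
have cF : continuous F.
  move=> x; apply: differentiable_continuous; apply/derivable1_diffP.
  by have [] := dF x.
apply: continuous_FTC2 => //.
- exact: continuous_subspaceT.
- split.
  + by move=> x _; have [] := dF x.
  + exact/cvg_at_right_filter/cF.
  + exact/cvg_at_left_filter/cF.
- move=> x _; rewrite derive1E; exact: derive_val.
Qed.

Lemma cont_ec (a b : R) : continuous (fun x : R => expR (a * x) * cos (b * x)).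
Proof.
move=> x; apply: cvgM.
  apply: (@continuous_comp _ _ _ (fun y => a * y) expR); last exact: continuous_expR.
  exact: mulrl_continuous.
apply: (@continuous_comp _ _ _ (fun y => b * y) cos); last exact: continuous_cos.
exact: mulrl_continuous.
Qed.

Lemma der_Gs (k a b p q x : R) : a * p - b * q = k -> a * q + b * p = 0 ->
  is_derive x 1 (Gs a b p q) (k * (expR (a * x) * sin (b * x))).
Proof.
move=> h1 h2.
have H := is_deriveM (der_expl a x)
   (is_deriveD (is_deriveZ p (der_sinl b x)) (is_deriveZ q (der_cosl b x))).
rewrite /Gs.
have -> : (fun x0 : R => expR (a * x0) * (p * sin (b * x0) + q * cos (b * x0))) = (fun y => expR (a*y)) * (p \*: (fun y => sin (b * y)) + q \*: (fun y => cos (b*y))).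
  by apply: funext => y.
apply: (is_derive_eq H).
have E : forall e c s : R, e * (p * (b * c) + q * - (b * s)) + (p * s + q * c) * (a * e) = k * (e * s).
  move=> e c s.
  have -> : k * (e * s) = e * s * (a * p - b * q) + e * c * (a * q + b * p) by rewrite h1 h2; ring.
  ring.
exact: E.
Qed.

Lemma cont_es (a b : R) : continuous (fun x : R => expR (a * x) * sin (b * x)).
Proof.
move=> x; apply: cvgM.
  apply: (@continuous_comp _ _ _ (fun y => a * y) expR); last exact: continuous_expR.
  exact: mulrl_continuous.
apply: (@continuous_comp _ _ _ (fun y => b * y) sin); last exact: continuous_sin.
exact: mulrl_continuous.
Qed.

Lemma contZ (k : R) (f : R -> R) : continuous f -> continuous (fun x => k * f x).
Proof. move=> cf x; apply: cvgM; [exact: cvg_cst | exact: cf]. Qed.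


Lemma Re_cexp_mul (xi : R) (W : R[i]) :
  complex.Re (cexp (xi%:C * W)) = expR (complex.Re W * xi) * cos (complex.Im W * xi).
Proof. case: W => a b; rewrite /cexp /=; by simpc; rewrite (mulrC xi) (mulrC xi). Qed.


Lemma Im_cexp_mul (xi : R) (W : R[i]) :
  complex.Im (cexp (xi%:C * W)) = expR (complex.Re W * xi) * sin (complex.Im W * xi).
Proof. case: W => a b; rewrite /cexp /=; by simpc; rewrite (mulrC xi) (mulrC xi). Qed.

Lemma Re_rmul (r : R) (w : R[i]) : complex.Re (r%:C * w) = r * complex.Re w.
Proof. by case: w => a b /=; by simpc. Qed.
Lemma Im_rmul (r : R) (w : R[i]) : complex.Im (r%:C * w) = r * complex.Im w.
Proof. by case: w => a b /=; by simpc. Qed.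

Lemma Re_mul (u v : R[i]) : complex.Re (u * v) = complex.Re u * complex.Re v - complex.Im u * complex.Im v.
Proof. by case: u => a b; case: v => c d /=; by simpc. Qed.
Lemma Im_mul (u v : R[i]) : complex.Im (u * v) = complex.Re u * complex.Im v + complex.Im u * complex.Re v.
Proof. by case: u => a b; case: v => c d /=; by simpc. Qed.

Lemma Re_sub (u v : R[i]) : complex.Re (u - v) = complex.Re u - complex.Re v.
Proof. by case: u => a b; case: v => c d /=; by simpc. Qed.
Lemma Im_sub (u v : R[i]) : complex.Im (u - v) = complex.Im u - complex.Im v.
Proof. by case: u => a b; case: v => c d /=; by simpc. Qed.

Lemma cint_main (D : set R) (al be k : R) (W : R[i]) :
  `[al, be] `<=` D -> al < be -> W != 0 ->
  cintegral D (fun xi => (k * \1_(`[al, be]) xi)%:C * cexp (xi%:C * W)) =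
  (cexp (be%:C * W) - cexp (al%:C * W)) * (k%:C / W).
Proof.
move=> AD ab W0.
set V := k%:C / W.
have hWV : W * V = k%:C by rewrite mulrC divfK.
have h1 : complex.Re W * complex.Re V - complex.Im W * complex.Im V = k.
  by rewrite -Re_mul hWV.
have h2 : complex.Re W * complex.Im V + complex.Im W * complex.Re V = 0.
  by rewrite -Im_mul hWV.
rewrite /cintegral [RHS]complexE.
set a := complex.Re W; set b := complex.Im W; set p := complex.Re V; set q := complex.Im V.
congr (_%:C + _ * _%:C).
- transitivity (Rintegral lebesgue_measure `[al, be] (fun x => k * (expR (a * x) * cos (b * x)))).
    rewrite -[X in _ = Rintegral _ X _](setIidr AD) Rintegral_mkcondr; apply: eq_Rintegral => x _.
    rewrite Re_rmul Re_cexp_mul patchE indicE.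
    by case: (x \in `[al, be]); rewrite ?mulr1 ?mulr0 ?mul0r.
  have dG : forall x : R, is_derive x (1:R) (Gc a b p q) (k * (expR (a * x) * cos (b * x))).
    by move=> x; apply: der_Gc.
  have H := ftc_gen _ _ _ _ ab dG (contZ k _ (cont_ec a b)).
  rewrite /Rintegral H.
  have -> : fine ((Gc a b p q be)%:E - (Gc a b p q al)%:E)%E = Gc a b p q be - Gc a b p q al by [].
  rewrite mulrBl Re_sub (Re_mul (cexp (be%:C * W))) (Re_mul (cexp (al%:C * W))) !Re_cexp_mul !Im_cexp_mul /Gc -/p -/q -/a -/b; ring.
- transitivity (Rintegral lebesgue_measure `[al, be] (fun x => k * (expR (a * x) * sin (b * x)))).
    rewrite -[X in _ = Rintegral _ X _](setIidr AD) Rintegral_mkcondr; apply: eq_Rintegral => x _.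
    rewrite Im_rmul Im_cexp_mul patchE indicE.
    by case: (x \in `[al, be]); rewrite ?mulr1 ?mulr0 ?mul0r.
  have dG : forall x : R, is_derive x (1:R) (Gs a b p q) (k * (expR (a * x) * sin (b * x))).
    by move=> x; apply: der_Gs.
  have H := ftc_gen _ _ _ _ ab dG (contZ k _ (cont_es a b)).
  rewrite /Rintegral H.
  have -> : fine ((Gs a b p q be)%:E - (Gs a b p q al)%:E)%E = Gs a b p q be - Gs a b p q al by [].
  rewrite mulrBl Im_sub (Im_mul (cexp (be%:C * W))) (Im_mul (cexp (al%:C * W))) !Re_cexp_mul !Im_cexp_mul /Gs -/p -/q -/a -/b; ring.
Qed.

Lemma L2_ind (lo hi al be k : R) : L2on lo hi (fun x => (k * \1_(`[al, be]) x)%:C).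
Proof.
have mI : measurable_fun `[lo, hi] (fun x : R => k * \1_(`[al, be]) x).
  have H1 := measurable_realfun.measurable_funM (measurable_cst k) (@measurable_realfun.measurable_indic _ _ R `[lo, hi]%classic _ (measurable_itv `[al, be]%R)). exact: H1.
split; [|split].
- exact: mI.
- exact: measurable_cst.
- apply: (@le_lt_trans _ _ (\int[lebesgue_measure]_(x in `[lo, hi]) (cst (k ^+ 2)%:E) x)%E).
    apply: ge0_le_integral => //.
    + by move=> x _; rewrite lee_fin addr_ge0 // sqr_ge0.
    + apply/measurable_realfun.measurable_EFinP.
      have -> : (fun x : R => complex.Re ((k * \1_`[al, be] x)%:C) ^+ 2 + complex.Im ((k * \1_`[al, be] x)%:C) ^+ 2) = (fun x => (k * \1_`[al, be] x) ^+ 2).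
        by apply: funext => x /=; rewrite expr0n /= addr0.
      exact: (measurable_realfun.measurable_funX 2 mI).
    + move=> x _; rewrite lee_fin /= expr0n /= addr0 indicE.
      by case: (x \in _); rewrite ?mulr1 ?mulr0 ?expr0n //= sqr_ge0.
  have Hm : (lebesgue_measure (`[lo, hi] : set R) < +oo)%E.
    by rewrite lebesgue_measure_itv /=; case: ifP => _; rewrite -?EFinB ?ltry.
  rewrite integral_cst //; apply: lte_mul_pinfty => //.
  by rewrite lee_fin sqr_ge0.
Qed.

Lemma cint_zero (D : set R) (al be k : R) :
  `[al, be] `<=` D -> al < be ->
  cintegral D (fun xi => (k * \1_(`[al, be]) xi)%:C * cexp (xi%:C * 0)) =
  (k * (be - al))%:C.
Proof.
move=> AD ab.
have HRe : Rintegral lebesgue_measure D (fun x => complex.Re ((k * \1_(`[al, be]) x)%:C * cexp (x%:C * 0))) = k * (be - al).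
  transitivity (Rintegral lebesgue_measure `[al, be] (fun x : R => k)).
    rewrite -[X in _ = Rintegral _ X _](setIidr AD) Rintegral_mkcondr; apply: eq_Rintegral => x _.
    rewrite Re_rmul Re_cexp_mul patchE indicE /= !mul0r expR0 cos0 mulr1.
    by case: (x \in `[al, be]); rewrite ?mulr1 ?mulr0.
  have dG : forall x : R, is_derive x (1:R) (fun y => k * y) k by move=> x; exact: der_lin.
  have H := ftc_gen _ _ _ _ ab dG (@cst_continuous _ _ k).
  rewrite /Rintegral H /=; ring.
have HIm : Rintegral lebesgue_measure D (fun x => complex.Im ((k * \1_(`[al, be]) x)%:C * cexp (x%:C * 0))) = 0.
  transitivity (Rintegral lebesgue_measure D (fun x : R => 0)).
    apply: eq_Rintegral => x _.
    by rewrite Im_rmul Im_cexp_mul /= !mul0r sin0 !mulr0.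
  by rewrite /Rintegral integral0.
rewrite /cintegral HRe HIm; apply/eqP; rewrite eq_complex /=; simpc.
by [].
Qed.

Lemma cexpD (u v : R[i]) : cexp (u + v) = cexp u * cexp v.
Proof.
case: u => a b; case: v => c d; rewrite /cexp /=.
simpc.
apply/eqP; rewrite eq_complex /= expRD cosD sinD; apply/andP; split; apply/eqP.
all: ring.
Qed.

Lemma Ci_neq0 : ('i : R[i]) != 0.
Proof. by rewrite eq_complex /= oner_eq0 andbF. Qed.
Lemma Creal_neq0 (r : R) : r != 0 -> r%:C != 0.
Proof. by move=> r0; rewrite eq_complex /= (negbTE r0). Qed.
Lemma Cpi_neq0 : (pi%:C : R[i]) != 0.
Proof. by apply: Creal_neq0; rewrite gt_eqF // pi_gt0. Qed.

Lemma f_formula (B eps : R) (z : R[i]) : z != 0 -> eps != 0 ->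
  let W := 2%:R * pi%:C * 'i * z in
  sinc (eps%:C * z) * cexp (pi%:C * 'i * (2 * B - eps)%:C * z) =
  (cexp (B%:C * W) - cexp ((B - eps)%:C * W)) * (1%:C / W) / eps%:C.
Proof.
move=> z0 e0 W.
have ez : eps%:C * z != 0 by rewrite mulf_neq0 // Creal_neq0.
have W0 : W != 0 by rewrite /W !mulf_neq0 ?Ci_neq0 ?Cpi_neq0 // pnatr_eq0.
rewrite /sinc (negbTE ez) /csin.
have E1 : cexp (B%:C * W) = cexp ('i * (pi%:C * (eps%:C * z))) * cexp (pi%:C * 'i * (2 * B - eps)%:C * z).
  by rewrite -cexpD /W; congr cexp; rewrite !(rmorphB, rmorphM, rmorph_nat); ring.
have E2 : cexp ((B - eps)%:C * W) = cexp (- ('i * (pi%:C * (eps%:C * z)))) * cexp (pi%:C * 'i * (2 * B - eps)%:C * z).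
  by rewrite -cexpD /W; congr cexp; rewrite !(rmorphB, rmorphM, rmorph_nat); ring.
rewrite E1 E2.
rewrite rmorph1 /W. set X := cexp (_ * (_ * _)). set Y := cexp (- _). set C := cexp _. have pn := Cpi_neq0; have en : eps%:C != 0 by exact: Creal_neq0. have iN := Ci_neq0. move: X Y C pn en iN ez; generalize (pi%:C : R[i]) (eps%:C : R[i]) ('i : R[i]) => p e i X Y C pn en iN ez. field.
by rewrite en z0 pn neq0Ci.
Qed.

Lemma g_formula (B eps : R) (z : R[i]) : z != 0 -> eps != 0 ->
  let W := 2%:R * pi%:C * 'i * z in
  sinc (eps%:C * z) * cexp (- (pi%:C * 'i * (2 * B - eps)%:C * z)) =
  (cexp ((- B + eps)%:C * W) - cexp ((- B)%:C * W)) * (1%:C / W) / eps%:C.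
Proof.
move=> z0 e0 W.
have ez : eps%:C * z != 0 by rewrite mulf_neq0 // Creal_neq0.
have W0 : W != 0 by rewrite /W !mulf_neq0 ?Ci_neq0 ?Cpi_neq0 // pnatr_eq0.
rewrite /sinc (negbTE ez) /csin.
have E1 : cexp ((- B + eps)%:C * W) = cexp ('i * (pi%:C * (eps%:C * z))) * cexp (- (pi%:C * 'i * (2 * B - eps)%:C * z)).
  by rewrite -cexpD /W; congr cexp; rewrite !(rmorphB, rmorphD, rmorphN, rmorphM, rmorph_nat); ring.
have E2 : cexp ((- B)%:C * W) = cexp (- ('i * (pi%:C * (eps%:C * z)))) * cexp (- (pi%:C * 'i * (2 * B - eps)%:C * z)).
  by rewrite -cexpD /W; congr cexp; rewrite !(rmorphB, rmorphD, rmorphN, rmorphM, rmorph_nat); ring.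
rewrite E1 E2.
rewrite rmorph1 /W. set X := cexp (_ * (_ * _)). set Y := cexp (- _). set C := cexp _. have pn := Cpi_neq0; have en : eps%:C != 0 by exact: Creal_neq0. have iN := Ci_neq0. move: X Y C pn en iN ez; generalize (pi%:C : R[i]) (eps%:C : R[i]) ('i : R[i]) => p e i X Y C pn en iN ez. field.
by rewrite en z0 pn neq0Ci.
Qed.

Lemma cexp_i (th : R) : cexp ('i * th%:C) = cos th +i* sin th.
Proof.
rewrite /cexp /=; simpc; rewrite /= expR0.
by rewrite !mul1r.
Qed.
Lemma cexp_mi (th : R) : cexp (- ('i * th%:C)) = cos th +i* (- sin th).
Proof.
rewrite /cexp /=; simpc; by rewrite expR0 cosN sinN !mul1r.
Qed.
Lemma csin_real (s : R) : csin s%:C = (sin s)%:C.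
Proof.
rewrite /csin cexp_i cexp_mi.
have h : (2 * 'i : R[i]) != 0 by rewrite mulf_neq0 ?Ci_neq0 // pnatr_eq0.
apply: (mulIf h); rewrite divfK //.
apply/eqP; rewrite eq_complex /=; simpc; rewrite /=; apply/eqP; ring.
Qed.

Definition sR (r : R) : R := if r == 0 then 1 else sin (pi * r) / (pi * r).

Lemma Creal_eq0 (r : R) : (r%:C == 0) = (r == 0).
Proof. by rewrite eq_complex /= eqxx andbT. Qed.

Lemma sinc_real (r : R) : sinc r%:C = (sR r)%:C.
Proof.
rewrite /sinc /sR Creal_eq0; case: ifP => // _.
by rewrite -rmorphM csin_real fmorph_div.
Qed.

Lemma f_real (B eps t : R) :
  sinc (eps%:C * t%:C) * cexp (pi%:C * 'i * (2 * B - eps)%:C * t%:C) =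
  (sR (eps * t))%:C * (cos (pi * (2 * B - eps) * t) +i* sin (pi * (2 * B - eps) * t)).
Proof.
rewrite -rmorphM sinc_real -cexp_i; congr (_ * cexp _).
by rewrite !rmorphM; ring.
Qed.

Lemma g_real (B eps t : R) :
  sinc (eps%:C * t%:C) * cexp (- (pi%:C * 'i * (2 * B - eps)%:C * t%:C)) =
  (sR (eps * t))%:C * (cos (pi * (2 * B - eps) * t) +i* (- sin (pi * (2 * B - eps) * t))).
Proof.
rewrite -rmorphM sinc_real -cexp_mi; congr (_ * cexp _).
by rewrite !rmorphM; ring.
Qed.

Lemma cexp0 : cexp (0 : R[i]) = 1.
Proof. rewrite /cexp /= expR0 cos0 sin0; apply/eqP; rewrite eq_complex /=; by simpc. Qed.

Lemma normc_conjflip (a b : R) : `|a +i* b| = `|a +i* (- b)|.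
Proof. by rewrite !normc_def /= sqrrN. Qed.
End T.

Theorem mainTheorem9 (R : realType) (B eps : R)
  (hB : 0 < B) (heps0 : 0 < eps) (heps1 : eps < 2 * B) :
  let c := (2 * B - eps)^-1 in
  let f := fun z : R[i] =>
    sinc (eps%:C * z) * cexp (pi%:C * 'i * (2 * B - eps)%:C * z) in
  let g := fun z : R[i] =>
    sinc (eps%:C * z) * cexp (- (pi%:C * 'i * (2 * B - eps)%:C * z)) in
  PW B f /\ PW B g /\
      (forall z : R[i], f z = (eps^-1)%:C * cintegral `[- B, B]
          (fun xi => (\1_(`[B - eps, B]) xi)%:C * cexp (2%:R * pi%:C * 'i * xi%:C * z))) /\
      (forall z : R[i], g z = (eps^-1)%:C * cintegral `[- B, B]
          (fun xi => (\1_(`[- B, - B + eps]) xi)%:C * cexp (2%:R * pi%:C * 'i * xi%:C * z))) /\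
      (forall t : R, `|f t%:C| = `|g t%:C|) /\
      (forall t : R, f t%:C * (f (t - c)%:C)^* = g t%:C * (g (t - c)%:C)^*) /\
      ~ (exists alpha : R, forall z : R[i], f z = cexp ('i * alpha%:C) * g z).
Proof.
move=> c f g.
have e0 : eps != 0 by rewrite gt_eqF.
have en : eps%:C != 0 :> R[i] by exact: Creal_neq0.
have S1 : `[B - eps, B] `<=` `[- B, B].
  move=> x /=; rewrite !in_itv /= => /andP[h1 h2]; apply/andP; split; lra.
have S2 : `[- B, - B + eps] `<=` `[- B, B].
  move=> x /=; rewrite !in_itv /= => /andP[h1 h2]; apply/andP; split; lra.
have ab1 : B - eps < B by lra.
have ab2 : - B < - B + eps by lra.
have Hf : forall (k : R) (z : R[i]), cintegral `[- B, B]
    (fun xi => (k * \1_(`[B - eps, B]) xi)%:C * cexp (2%:R * pi%:C * 'i * xi%:C * z)) =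
    k%:C * eps%:C * f z.
  move=> k z; case: (eqVneq z 0) => [->|z0].
    rewrite (_ : (fun xi => _) = (fun xi => (k * \1_(`[B - eps, B]) xi)%:C * cexp (xi%:C * 0))); last first.
      by apply: funext => xi; rewrite !mulr0.
    rewrite cint_zero // /f !mulr0 /sinc eqxx cexp0 mulr1 -rmorphM.
    by rewrite mulr1; congr (_%:C); ring.
  rewrite (_ : (fun xi => _) = (fun xi => (k * \1_(`[B - eps, B]) xi)%:C * cexp (xi%:C * (2%:R * pi%:C * 'i * z)))); last first.
    by apply: funext => xi; congr (_ * cexp _); ring.
  have W0 : (2%:R * pi%:C * 'i * z : R[i]) != 0 by rewrite !mulf_neq0 ?Ci_neq0 ?Cpi_neq0 // pnatr_eq0.
  move: (@f_formula R B eps z z0 e0) => /= Ff.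
  rewrite cint_main // /f Ff rmorph1.
  set W := (X in k%:C / X).
  have W0' : W != 0 by exact: W0.
  set X := cexp (B%:C * W); set Y := cexp ((B - eps)%:C * W).
  rewrite -[(1 / _)]/(1 / W).
  move: W0' X Y; generalize W => W1 W0' X Y.
  by field; rewrite W0' andbT; exact: en.
have Hg : forall (k : R) (z : R[i]), cintegral `[- B, B]
    (fun xi => (k * \1_(`[- B, - B + eps]) xi)%:C * cexp (2%:R * pi%:C * 'i * xi%:C * z)) =
    k%:C * eps%:C * g z.
  move=> k z; case: (eqVneq z 0) => [->|z0].
    rewrite (_ : (fun xi => _) = (fun xi => (k * \1_(`[- B, - B + eps]) xi)%:C * cexp (xi%:C * 0))); last first.
      by apply: funext => xi; rewrite !mulr0.
    rewrite cint_zero // /g !mulr0 oppr0 /sinc eqxx cexp0 mulr1 -rmorphM.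
    by rewrite mulr1; congr (_%:C); ring.
  rewrite (_ : (fun xi => _) = (fun xi => (k * \1_(`[- B, - B + eps]) xi)%:C * cexp (xi%:C * (2%:R * pi%:C * 'i * z)))); last first.
    by apply: funext => xi; congr (_ * cexp _); ring.
  have W0 : (2%:R * pi%:C * 'i * z : R[i]) != 0 by rewrite !mulf_neq0 ?Ci_neq0 ?Cpi_neq0 // pnatr_eq0.
  move: (@g_formula R B eps z z0 e0) => /= Gf.
  rewrite cint_main // /g Gf rmorph1.
  set W := (X in k%:C / X).
  have W0' : W != 0 by exact: W0.
  set X := cexp ((- B + eps)%:C * W); set Y := cexp ((- B)%:C * W).
  rewrite -[(1 / _)]/(1 / W).
  move: W0' X Y; generalize W => W1 W0' X Y.
  by field; rewrite W0' andbT; exact: en.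

have fr : forall t, f t%:C = (sR R (eps * t))%:C * (cos (pi * (2 * B - eps) * t) +i* sin (pi * (2 * B - eps) * t)).
  by move=> t; exact: f_real.
have gr : forall t, g t%:C = (sR R (eps * t))%:C * (cos (pi * (2 * B - eps) * t) +i* (- sin (pi * (2 * B - eps) * t))).
  by move=> t; exact: g_real.
split.
  exists (fun xi => (eps^-1 * \1_(`[B - eps, B]) xi)%:C); split; first exact: L2_ind.
  by move=> z; rewrite Hf -rmorphM mulVf // mul1r.
split.
  exists (fun xi => (eps^-1 * \1_(`[- B, - B + eps]) xi)%:C); split; first exact: L2_ind.
  by move=> z; rewrite Hg -rmorphM mulVf // mul1r.
split.
  move=> z; rewrite (_ : (fun xi => _) = (fun xi => (1 * \1_(`[B - eps, B]) xi)%:C * cexp (2%:R * pi%:C * 'i * xi%:C * z))); last first.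
    by apply: funext => xi; rewrite mul1r.
  by rewrite Hf rmorph1 mul1r mulrA -rmorphM mulVf // rmorph1 mul1r.
split.
  move=> z; rewrite (_ : (fun xi => _) = (fun xi => (1 * \1_(`[- B, - B + eps]) xi)%:C * cexp (2%:R * pi%:C * 'i * xi%:C * z))); last first.
    by apply: funext => xi; rewrite mul1r.
  by rewrite Hg rmorph1 mul1r mulrA -rmorphM mulVf // rmorph1 mul1r.
split.
  by move=> t; rewrite /f /g f_real g_real !normrM; congr (_ * _); exact: normc_conjflip.
split.
  move=> t; rewrite !fr !gr.
  have Hth : pi * (2 * B - eps) * (t - c) = pi * (2 * B - eps) * t - pi.
    have hn : 2 * B - eps != 0 by rewrite gt_eqF // subr_gt0.
    by rewrite /c mulrBr; congr (_ - _); rewrite -mulrA divff // mulr1.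
  rewrite Hth cosB sinB cospi sinpi.
  move: (sR R (eps * t)) (sR R (eps * (t - c))) (pi * (2 * B - eps) * t) => s1 s2 th.
  rewrite /real_complex_def; simpc.
  apply/eqP; rewrite eq_complex /=; apply/andP; split; apply/eqP; ring.
case=> al H.
have H0 := H 0%:C.
set t0 := (4 * B)^-1.
have H1 := H t0%:C.
rewrite fr gr cexp_i !mulr0 /sR eqxx cos0 sin0 oppr0 in H0.
rewrite fr gr cexp_i in H1.
move: H0 H1; rewrite /real_complex_def; simpc.
move=> /eqP; rewrite eq_complex /= => /andP[/eqP h1 /eqP h2].
move=> /eqP; rewrite eq_complex /= => /andP[/eqP h3 /eqP h4].
rewrite -h1 -h2 in h4.
have B4 : 0 < 4 * B by lra.
have t0p : 0 < t0 by rewrite invr_gt0.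
have ltpi : forall u : R, 0 < u -> u < 1 -> 0 < pi * u < pi.
  move=> u u0 u1; apply/andP; split; first by rewrite mulr_gt0 // pi_gt0.
  by rewrite -[X in _ < X]mulr1 ltr_pM2l // pi_gt0.
have et1 : eps * t0 < 1 by rewrite ltr_pdivrMr // mul1r; lra.
have et0 : 0 < eps * t0 by rewrite mulr_gt0.
have bt1 : (2 * B - eps) * t0 < 1 by rewrite ltr_pdivrMr // mul1r; lra.
have bt0 : 0 < (2 * B - eps) * t0 by rewrite mulr_gt0 // subr_gt0.
have sp : 0 < sR R (eps * t0).
  rewrite /sR (gt_eqF et0); apply: divr_gt0; last by rewrite mulr_gt0 // pi_gt0.
  exact/sin_gt0_pi/ltpi.
have thp : 0 < sin (pi * (2 * B - eps) * t0).
  by rewrite -mulrA; exact/sin_gt0_pi/ltpi.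
have := mulr_gt0 sp thp.
move: h4; move: (sR R (eps * t0)) (sin (pi * (2 * B - eps) * t0)) (sin al) (cos (pi * (2 * B - eps) * t0)) => a b u v h4 hab.
have : a * b = 0.
  have -> : a * b = (a * b - (- (1 * (a * b)) + 0 * (a * v))) / 2 by field.
  by rewrite -h4 subrr mul0r.
lra.
Qed.
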